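(* Let $\alpha\ge4$ and $B>1$. Let $\mathcal{F}=A_n\circ\cdots\circ A_0$ be a deep learning model in which every block $A_i$ is a basic block, i.e. one of: a linear block $A(\mathbf{x})=\mathbf{A}\mathbf{x}+\mathbf{b}$ (approximation $A^\alpha=A$); a ReLU block (coordinatewise $\max(x,0)$, approximated by applying $\tilde r_{\alpha,B}$ coordinatewise); a max-pooling block with kernel size $k_0\le10$ (each output coordinate is the max of a window of $k_0^2$ inputs, approximated by applying $\tilde M_{\alpha,k_0^2,B}$ to each window); or a softmax block $A(\mathbf{x})=(\exp(x_i)/\sum_j\exp(x_j))_i$ (approximation $A^\alpha=A$). Let $\mathcal{F}^\alpha=A_n^\alpha\circ\cdots\circ A_0^\alpha$. Assume that for every input $\mathbf{x}$ considered, $\|\mathbf{x}\|_\infty\le B$ and $\|A_i\circ\cdots\circ A_0(\mathbf{x})\|_\infty\le B$, $\|A_i^\alpha\circ\cdots\circ A_0^\alpha(\mathbf{x})\|_\infty\le B$ for $0\le i\le n-1$. Then there exists a constant $C$, which can be determined independently of $\alpha$, such that $\|\mathcal{F}^\alpha(\mathbf{x})-\mathcal{F}(\mathbf{x})\|_\infty\le C2^{-\alpha}$ for every such input $\mathbf{x}$.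
   Context: Let $p_\alpha$ be a polynomial such that $m_\alpha(a,b)=\frac{(a+b)+(a-b)p_\alpha(a-b)}{2}$ satisfies $|m_\alpha(a,b)-\max(a,b)|\le2^{-\alpha}$ for all $a,b\in[0,1]$. Define $r_\alpha(x)=\frac{x+xp_\alpha(x)}{2}$ and $\tilde r_{\alpha,B}(x)=B\,r_\alpha(x/B)$. Define $M_{\alpha,1}(x_1)=x_1$, $M_{\alpha,2k}(x_1,\dots,x_{2k})=m_\alpha(M_{\alpha,k}(x_1,\dots,x_k),M_{\alpha,k}(x_{k+1},\dots,x_{2k}))$, $M_{\alpha,2k+1}(x_1,\dots,x_{2k+1})=m_\alpha(M_{\alpha,k}(x_1,\dots,x_k),M_{\alpha,k+1}(x_{k+1},\dots,x_{2k+1}))$, and $\tilde M_{\alpha,n,B}(x_1,\dots,x_n)=B'\big(M_{\alpha,n}(\tfrac{x_1}{B'}+0.5,\dots,\tfrac{x_n}{B'}+0.5)-0.5\big)$ with $B'=B/(0.5-(\lceil\log_2 n\rceil-1)2^{-\alpha})$. The constant $C$ may depend on the model parameters (the matrices of the linear blocks, kernel sizes) and on $B$, but not on $\alpha$. *)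

(* Defs.v *)
From HB Require Import structures.
From mathcomp Require Import all_boot all_order all_algebra.
From mathcomp Require Import reals.
From mathcomp Require Import sequences exp.
Set Implicit Arguments. Unset Strict Implicit. Unset Printing Implicit Defensive.
Import Order.TTheory GRing.Theory Num.Theory.
Local Open Scope ring_scope.

Definition supnorm (R : realType) (n : nat) (x : 'cV[R]_n) : R :=
  \big[Num.max/0]_(i < n) `|x i 0|.

(* Basic blocks A : R^m -> R^n.
   Max pooling with kernel size k0 (1 <= k0 <= 10): output coordinate j is the
   max of the window (x (w j t))_{t < k0^2}, listed in the order given by t. *)
Inductive block (R : realType) : nat -> nat -> Type :=
| BLinear (m n : nat) (A : 'M[R]_(n, m)) (b : 'cV[R]_n) : block R m n
| BReLU (n : nat) : block R n n
| BMaxPool (m n k0 : nat) (hk : (0 < k0 <= 10)%N)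
           (w : 'I_n -> 'I_(k0 ^ 2) -> 'I_m) : block R m n
| BSoftmax (n : nat) : block R n n.

Inductive model (R : realType) : nat -> nat -> Type :=
| MBlock (m n : nat) (b : block R m n) : model R m n
| MComp (m k n : nat) (A : block R k n) (F : model R m k) : model R m n.

Definition maxseq (R : realType) (s : seq R) : R := foldr Num.max (head 0 s) s.

Definition window (R : realType) (m n k0 : nat) (w : 'I_n -> 'I_(k0 ^ 2) -> 'I_m)
  (x : 'cV[R]_m) (j : 'I_n) : seq R :=
  [seq x (w j t) 0 | t <- enum 'I_(k0 ^ 2)].

Definition softmax (R : realType) (n : nat) (x : 'cV[R]_n) : 'cV[R]_n :=
  \col_i (expR (x i 0) / \sum_(j < n) expR (x j 0)).

Definition block_eval (R : realType) (m n : nat) (A : block R m n) :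
  'cV[R]_m -> 'cV[R]_n :=
  match A in block _ m n return 'cV[R]_m -> 'cV[R]_n with
  | BLinear _ _ M b => fun x => M *m x + b
  | BReLU _ => fun x => \col_i Num.max (x i 0) 0
  | BMaxPool _ _ _ _ w => fun x => \col_j maxseq (window w x j)
  | BSoftmax _ => fun x => softmax x
  end.

Definition malpha (R : realType) (p : {poly R}) (a b : R) : R :=
  ((a + b) + (a - b) * p.[a - b]) / 2.

Definition ralpha (R : realType) (p : {poly R}) (x : R) : R := (x + x * p.[x]) / 2.
Definition rtilde (R : realType) (p : {poly R}) (B x : R) : R := B * ralpha p (x / B).

Fixpoint Mrec (R : realType) (p : {poly R}) (fuel : nat) (s : seq R) : R :=
  match fuel with
  | 0 => head 0 s
  | fuel'.+1 =>
      if (size s <= 1)%N then head 0 s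
      else malpha p (Mrec p fuel' (take (size s)./2 s))
                    (Mrec p fuel' (drop (size s)./2 s))
  end.
Definition Mtree (R : realType) (p : {poly R}) (s : seq R) : R := Mrec p (size s) s.

(* B' = B / (0.5 - (ceil(log2 n) - 1) 2^-alpha); up_log 2 n = ceil(log2 n) *)
Definition Bprime (R : realType) (alpha n : nat) (B : R) : R :=
  B / (2^-1 - ((up_log 2 n)%:R - 1) * 2 ^- alpha).

Definition Mtilde (R : realType) (p : {poly R}) (alpha : nat) (B : R) (s : seq R) : R :=
  let B' := Bprime alpha (size s) B in
  B' * (Mtree p [seq y / B' + 2^-1 | y <- s] - 2^-1).

Definition block_approx (R : realType) (p : nat -> {poly R}) (alpha : nat) (B : R)
  (m n : nat) (A : block R m n) : 'cV[R]_m -> 'cV[R]_n :=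
  match A in block _ m n return 'cV[R]_m -> 'cV[R]_n with
  | BLinear _ _ M b => fun x => M *m x + b
  | BReLU _ => fun x => \col_i rtilde (p alpha) B (x i 0)
  | BMaxPool _ _ _ _ w => fun x => \col_j Mtilde (p alpha) alpha B (window w x j)
  | BSoftmax _ => fun x => softmax x
  end.

Fixpoint model_eval (R : realType) (ev : forall m n, block R m n -> 'cV[R]_m -> 'cV[R]_n)
  (m n : nat) (F : model R m n) : 'cV[R]_m -> 'cV[R]_n :=
  match F in model _ m n return 'cV[R]_m -> 'cV[R]_n with
  | MBlock _ _ b => ev _ _ b
  | MComp _ _ _ A F' => fun x => ev _ _ A (model_eval ev F' x)
  end.

Fixpoint inner_bounded (R : realType) (ev : forall m n, block R m n -> 'cV[R]_m -> 'cV[R]_n)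
  (B : R) (m n : nat) (F : model R m n) : 'cV[R]_m -> Prop :=
  match F in model _ m n return 'cV[R]_m -> Prop with
  | MBlock _ _ _ => fun _ => True
  | MComp _ _ _ _ F' => fun x =>
      inner_bounded ev B F' x /\ supnorm (model_eval ev F' x) <= B
  end.

(* Main.v *)
Require Import Defs.
From HB Require Import structures.
From mathcomp Require Import all_boot all_order all_algebra.
From mathcomp Require Import reals.
From mathcomp Require Import sequences exp.
From mathcomp Require Import ring lra zify.
Import Order.TTheory GRing.Theory Num.Theory.
Local Open Scope ring_scope.

Lemma max_lip (R : realType) (a b c d e : R) :
  `|a - c| <= e -> `|b - d| <= e -> `|Num.max a b - Num.max c d| <= e.
Proof.
rewrite !ler_norml => /andP[h1 h2] /andP[h3 h4].
case: (leP a b) => h5; case: (leP c d) => h6; apply/andP; split; lra.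
Qed.

Lemma relu_lip (R : realType) (a c : R) :
  `|Num.max a 0 - Num.max c 0| <= `|a - c|.
Proof. by apply: max_lip; rewrite ?subrr ?normr0. Qed.

Lemma maxseq_cons (R : realType) (x : R) (t : seq R) :
  maxseq (x :: t) = foldr Num.max x t.
Proof.
rewrite /maxseq /=.
have: x <= foldr Num.max x t.
  elim: t => [|y t IH] /=; first by [].
  by rewrite le_max IH orbT.
by move=> h; rewrite max_r.
Qed.

Lemma maxseq_spec (R : realType) (s : seq R) : s != [::] ->
  maxseq s \in s /\ forall y, y \in s -> y <= maxseq s.
Proof.
case: s => [//|x t] _; rewrite maxseq_cons.
elim: t => [|y t [IH1 IH2]] /=.
  by split; [rewrite mem_seq1 | move=> y; rewrite mem_seq1 => /eqP ->].
split.
  case: (leP y (foldr Num.max x t)) => _.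
    by move: IH1; rewrite !inE => /orP[->|->]; rewrite ?orbT.
  by rewrite !inE eqxx orbT.
move=> z; rewrite !inE => /or3P[/eqP->| /eqP-> |zt].
- by rewrite le_max IH2 ?orbT // mem_head.
- by rewrite le_max lexx.
- by rewrite le_max IH2 ?orbT // inE zt orbT.
Qed.

Lemma maxseq_uniq (R : realType) (s : seq R) v :
  v \in s -> (forall y, y \in s -> y <= v) -> maxseq s = v.
Proof.
move=> vs ub.
have sn : s != [::] by move: vs; case: (s).

have [h1 h2] := maxseq_spec _ _ sn.
by apply/eqP; rewrite eq_le ub // h2.
Qed.

Lemma maxseq_cat (R : realType) (s1 s2 : seq R) : s1 != [::] -> s2 != [::] ->
  maxseq (s1 ++ s2) = Num.max (maxseq s1) (maxseq s2).
Proof.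
move=> n1 n2; have [a1 b1] := maxseq_spec _ _ n1; have [a2 b2] := maxseq_spec _ _ n2.
apply: maxseq_uniq.
  by case: (leP (maxseq s1) (maxseq s2)) => _; rewrite mem_cat ?a1 ?a2 ?orbT.
move=> y; rewrite mem_cat => /orP[h|h]; rewrite le_max; [by rewrite b1 | by rewrite b2 ?orbT].
Qed.

Lemma maxseq_map_lip (R : realType) (T : eqType) (r : seq T) (f g : T -> R) d :
  0 <= d -> (forall t, t \in r -> `|f t - g t| <= d) ->
  `|maxseq (map f r) - maxseq (map g r)| <= d.
Proof.
move=> d0 h; case: r h => [|t0 r] h; first by rewrite /maxseq /= subrr normr0.
have nf : map f (t0 :: r) != [::] by [].
have ng : map g (t0 :: r) != [::] by [].
have [af bf] := maxseq_spec _ _ nf; have [ag bg] := maxseq_spec _ _ ng.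
move: af => /mapP[t1 t1r e1]; move: ag => /mapP[t2 t2r e2].
have := h _ t1r; have := h _ t2r.
have := bf (f t2) (map_f _ t2r); have := bg (g t1) (map_f _ t1r).
rewrite e1 e2 !ler_norml => q1 q2 /andP[q3 q4] /andP[q5 q6].
apply/andP; split; lra.
Qed.

Lemma supnorm_ge0 (R : realType) n (x : 'cV[R]_n) : 0 <= supnorm x.
Proof.
rewrite /supnorm; apply: (big_ind (fun v => 0 <= v)) => //.
by move=> a b ha hb; rewrite le_max ha.
Qed.

Lemma supnorm_le (R : realType) n (x : 'cV[R]_n) c : 0 <= c ->
  (forall i, `|x i 0| <= c) -> supnorm x <= c.
Proof.
move=> c0 h; rewrite /supnorm; apply: (big_ind (fun v => v <= c)) => //.
by move=> a b ha hb; rewrite ge_max ha.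
Qed.

Lemma supnorm_ge (R : realType) n (x : 'cV[R]_n) i : `|x i 0| <= supnorm x.
Proof.
rewrite /supnorm /index_enum; have := mem_index_enum i; rewrite /index_enum.
elim: (Finite.enum _) => [//|j r IH]; rewrite inE big_cons /= => /orP[/eqP<-|h].
  by rewrite le_max lexx.
by rewrite le_max IH ?orbT.
Qed.

Lemma Mrec_small (R : realType) (p : {poly R}) f (s : seq R) :
  (size s <= 1)%N -> Mrec p f s = head 0 s.
Proof. by case: f => [|f] //= ->. Qed.

Lemma Mrec_one (R : realType) (p : {poly R}) f (s : seq R) (c : R) : 0 <= c ->
  (0 < size s)%N -> (size s <= 1)%N -> `|Mrec p f s - maxseq s| <= c.
Proof.
move=> c0 h0 h1; rewrite Mrec_small //.
case: s h0 h1 => [|x [|y t]] //= _ _.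
by rewrite /maxseq /= maxxx subrr normr0.
Qed.

Lemma tree_err (R : realType) (p : {poly R}) (e : R) (he : 0 <= e)
  (hp : forall a b : R, 0 <= a <= 1 -> 0 <= b <= 1 ->
      `|malpha p a b - Num.max a b| <= e) (d : nat) :
  forall f (s : seq R), (0 < size s)%N -> (size s <= 2 ^ d)%N -> (size s <= f.+1)%N ->
  (forall y, y \in s -> (d%:R - 1) * e <= y <= 1 - (d%:R - 1) * e) ->
  `|Mrec p f s - maxseq s| <= d%:R * e.
Proof.
elim: d => [|d IH] f s h0 h2 hf hy.
  by apply: Mrec_one; rewrite // ?mul0r // -(expn0 2).
have [|big] := leqP (size s) 1; first by apply: Mrec_one; rewrite // mulr_ge0.
case: f hf => [|f] hf; first by move: (leq_trans big hf).
rewrite /= leqNgt big /=.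
set k := size s.
have hk : (0 < k./2 /\ 0 < k - k./2 /\ k./2 <= 2 ^ d /\ k - k./2 <= 2 ^ d /\ k - k./2 <= f.+1)%N.
  move: h2 hf big; rewrite expnS -/k -divn2; lia.
case: hk => a1 [a2 [a3 [a4 a5]]].
have kk : (k./2 < k)%N by lia.
have sz1 : size (take k./2 s) = k./2 by rewrite size_take kk.
have sz2 : size (drop k./2 s) = (k - k./2)%N by rewrite size_drop.
have n1 : take k./2 s != [::] by rewrite -size_eq0 sz1 -lt0n.
have n2 : drop k./2 s != [::] by rewrite -size_eq0 sz2 -lt0n.
have hy' : forall y, y \in s -> (d%:R - 1) * e <= y <= 1 - (d%:R - 1) * e.
  move=> y /hy; rewrite -natr1 addrK => /andP[q1 q2].
  apply/andP; split; nra.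
have hyd : forall y, y \in s -> d%:R * e <= y <= 1 - d%:R * e.
  by move=> y /hy; rewrite -natr1 addrK.
have e1 := IH f (take k./2 s) ltac:(by rewrite sz1) ltac:(by rewrite sz1)
   ltac:(by rewrite sz1; lia) (fun y h => hy' y (mem_take h)).
have e2 := IH f (drop k./2 s) ltac:(by rewrite sz2) ltac:(by rewrite sz2)
   ltac:(by rewrite sz2) (fun y h => hy' y (mem_drop h)).
have [m1 _] := maxseq_spec _ _ n1; have [m2 _] := maxseq_spec _ _ n2.
have /andP[b1 b2] := hyd _ (mem_take m1); have /andP[b3 b4] := hyd _ (mem_drop m2).
move: e1 e2; set u := Mrec p f _; set v := Mrec p f _ => e1 e2.
have hu : 0 <= u <= 1 by move: e1; rewrite ler_norml => /andP[? ?]; apply/andP; split; lra.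
have hv : 0 <= v <= 1 by move: e2; rewrite ler_norml => /andP[? ?]; apply/andP; split; lra.
have := hp _ _ hu hv; have := @max_lip _ _ _ _ _ _ e1 e2.
rewrite -{3}(cat_take_drop k./2 s) maxseq_cat // -natr1.
set M := Num.max (maxseq _) _; set mm := Num.max u v; set ma := malpha _ _ _.
rewrite !ler_norml => /andP[? ?] /andP[? ?]; apply/andP; split; lra.
Qed.
Lemma eps_bnd (R : realType) (a : nat) : (4 <= a)%N -> 0 <= (2 ^- a : R) <= 16^-1.
Proof.
move=> ha.
have P : (16 : R) <= 2 ^+ a.
  have -> : (16 : R) = 2 ^+ 4 by rewrite !exprS expr0; lra.  
  by rewrite ler_eXn2l // ltr1n.
have e0 : 0 < (2 ^+ a : R) by rewrite exprn_gt0.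
have h : (2 ^- a : R) * 2 ^+ a = 1 by rewrite mulVf // gt_eqF.
have h0 : 0 <= (2 ^- a : R) by rewrite invr_ge0 ltW.
apply/andP; split => //; nra.
Qed.

Lemma mtilde_err (R : realType) (p : {poly R}) (a : nat) (ha : (4 <= a)%N)
  (hp : forall x y : R, 0 <= x <= 1 -> 0 <= y <= 1 ->
      `|malpha p x y - Num.max x y| <= 2 ^- a)
  (B : R) (hB : 0 < B) (s : seq R) : (0 < size s)%N -> (size s <= 100)%N ->
  (forall y, y \in s -> `|y| <= B) ->
  `|Mtilde p a B s - maxseq s| <= 56 * B * 2 ^- a.
Proof.
move=> s0 s100 hy.
have /andP[e0 e1] := eps_bnd R a ha.
set e := (2 ^- a : R) in e0 e1 hp *.
rewrite /Mtilde /Bprime.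
set D := up_log 2 (size s).
have D7 : (D <= 7)%N by apply: up_log_min => //; apply: leq_trans s100 _.
have sD : (size s <= 2 ^ D)%N by apply: up_logP.
have D7r : (D%:R : R) <= 7 by rewrite (ler_nat R D 7).
have D0r : 0 <= (D%:R : R) by [].
set q := 2^-1 - (D%:R - 1) * e.
have q8 : 8^-1 <= q by rewrite /q; nra.
have q0 : 0 < q by apply: lt_le_trans q8; rewrite invr_gt0.
set B' := B / q.
have B'0 : 0 < B' by rewrite divr_gt0.
have B'8 : B' <= 8 * B.
  rewrite /B' ler_pdivrMr //.
  have : 1 <= 8 * q by lra.
  nra.
set s' := map _ s.
have ss' : size s' = size s by rewrite size_map.
have hz : forall z, z \in s' -> (D%:R - 1) * e <= z <= 1 - (D%:R - 1) * e.
  move=> z /mapP[y ys ->].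
  have : y / B' = (y / B) * q by rewrite /B'; field; apply/andP; split; rewrite gt_eqF.
  move=> ->.
  have t : `|y / B| <= 1 by rewrite normrM normfV (gtr0_norm hB) ler_pdivrMr // mul1r hy.
  move: t; rewrite ler_norml => /andP[t1 t2].
  apply/andP; split; rewrite /q in q0 *; nra.
have T := tree_err R p e e0 hp D (size s') s'
    ltac:(by rewrite ss') ltac:(by rewrite ss') (leqnSn _) hz.
have sn : s != [::] by rewrite -size_eq0 -lt0n.
have [m1 m2] := maxseq_spec _ _ sn.
have ms' : maxseq s' = maxseq s / B' + 2^-1.
  apply: maxseq_uniq; first by apply: map_f.
  move=> z /mapP[y ys ->]; rewrite lerD2r; apply: ler_wpM2r; [by rewrite invr_ge0 ltW|].
  exact: (m2 y ys).
move: T; rewrite /Mtree ms' => HT.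
set T := Mrec _ _ _ in HT *.
have -> : B' * (T - 2^-1) - maxseq s = B' * (T - (maxseq s / B' + 2^-1)).
  by field; rewrite gt_eqF.
rewrite normrM gtr0_norm //.
apply: le_trans (ler_wpM2l (ltW B'0) HT) _.
have De : D%:R * e <= 7 * e by nra.
have h1 : B' * (D%:R * e) <= B' * (7 * e) by rewrite ler_wpM2l // ltW.
have h2 : B' * (7 * e) <= (8 * B) * (7 * e) by rewrite ler_wpM2r // mulr_ge0.
lra.
Qed.

Lemma relu_err (R : realType) (p : {poly R}) (e : R)
  (hp : forall x y : R, 0 <= x <= 1 -> 0 <= y <= 1 ->
      `|malpha p x y - Num.max x y| <= e)
  (B : R) (hB : 0 < B) (y : R) : `|y| <= B ->
  `|rtilde p B y - Num.max y 0| <= B * e.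
Proof.
move=> hy.
have ht1 : `|y / B| <= 1 by rewrite normrM normfV (gtr0_norm hB) ler_pdivrMr // mul1r.
have ey : y = B * (y / B) by field; rewrite gt_eqF.
rewrite /rtilde {2}ey; move: ht1; set t := y / B => ht1.
move: ht1; rewrite ler_norml => /andP[t1 t2].
have : `|ralpha p t - Num.max t 0| <= e.
  case: (leP 0 t) => ht.
    have := hp t 0; rewrite /malpha addr0 subr0 ht t2 lexx ler01 /=.
    by rewrite /ralpha max_l //; apply.
  have := hp 0 (- t); rewrite /malpha add0r sub0r opprK.
  rewrite lexx ler01 /= oppr_ge0 (ltW ht) /=.
  have -> : - t <= 1 by lra.
  move=> /(_ isT isT).
  have -> : Num.max 0 (- t) = - t by rewrite max_r // oppr_ge0 ltW.
  by rewrite /ralpha subr0; congr (`|_| <= _); field.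
move=> h.
have -> : Num.max (B * t) 0 = B * Num.max t 0.
  case: (leP 0 t) => h0.
    by rewrite !max_l // mulr_ge0 // ltW.
  rewrite !max_r ?mulr0 // ?ltW //.
  by rewrite pmulr_rlt0.
by rewrite -mulrBr normrM gtr0_norm // ler_wpM2l // ltW.
Qed.

Lemma exp_lip (R : realType) (B a b : R) : a <= B -> b <= B ->
  `|expR a - expR b| <= expR B * `|a - b|.
Proof.
move=> ha hb.
have k : forall u v : R, expR v * (u - v) <= expR u - expR v.
  move=> u v; have := expR_ge1Dx (u - v).
  have -> : expR u = expR v * expR (u - v) by rewrite -expRD addrC subrK.
  have := expR_gt0 v; nra.
have ea := k a b; have eb := k b a.
have la : expR a <= expR B by rewrite ler_expR.
have lb : expR b <= expR B by rewrite ler_expR.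
have := expR_gt0 a; have := expR_gt0 b => g1 g2.
rewrite ler_norml; case: (leP a b) => h.
  rewrite distrC ger0_norm ?subr_ge0 //.
  have : 0 <= b - a by rewrite subr_ge0.
  move=> h0; apply/andP; split; nra.
rewrite gtr0_norm ?subr_gt0 //.
have : 0 <= a - b by rewrite subr_ge0 ltW.
move=> h0; apply/andP; split; nra.
Qed.

Lemma softmax_lip (R : realType) (B : R) n (x y : 'cV[R]_n) i :
  supnorm x <= B -> supnorm y <= B ->
  `|softmax y i 0 - softmax x i 0| <=
    expR B * expR B * (1 + n%:R) * supnorm (y - x).
Proof.
move=> hx hy; rewrite !mxE.
set d := supnorm (y - x).
have hd : forall j, `|y j 0 - x j 0| <= d by move=> j; have := supnorm_ge _ _ (y - x) j; rewrite !mxE.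
have bx : forall j, `|x j 0| <= B by move=> j; apply: le_trans (supnorm_ge _ _ x j) hx.
have by' : forall j, `|y j 0| <= B by move=> j; apply: le_trans (supnorm_ge _ _ y j) hy.
have d0 : 0 <= d by apply: supnorm_ge0.
set eB := expR B.
have eB0 : 0 < eB by apply: expR_gt0.
have ediff : forall j, `|expR (y j 0) - expR (x j 0)| <= eB * d.
  move=> j; apply: le_trans (exp_lip R B (y j 0) (x j 0) _ _) _.
  - by have := by' j; rewrite ler_norml => /andP[].
  - by have := bx j; rewrite ler_norml => /andP[].
  by apply: ler_wpM2l; [exact: ltW | exact: hd].
set Sx := \sum_(j < n) expR (x j 0); set Sy := \sum_(j < n) expR (y j 0).
have Sge : forall z : 'cV[R]_n, expR (z i 0) <= \sum_(j < n) expR (z j 0).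
  move=> z; rewrite (bigD1 i) //= lerDl; apply: sumr_ge0 => j _; exact: ltW (expR_gt0 _).
have Sxp : 0 < Sx by apply: lt_le_trans (Sge x); apply: expR_gt0.
have Syp : 0 < Sy by apply: lt_le_trans (Sge y); apply: expR_gt0.
have iSx : Sx^-1 <= eB.
  rewrite -[Sx^-1]mul1r ler_pdivrMr //.
  have : expR (- B) <= expR (x i 0) by rewrite ler_expR; have := bx i; rewrite ler_norml => /andP[].
  have := Sge x; rewrite -/Sx expRN -/eB => h1 h2.
  have : 1 <= eB * expR (x i 0).
    by rewrite -(ler_pdivrMl _ _ eB0) mulr1.
  nra.
have qy : expR (y i 0) / Sy <= 1 by rewrite ler_pdivrMr // mul1r Sge.
have qy0 : 0 <= expR (y i 0) / Sy by rewrite divr_ge0 // ltW // expR_gt0.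
have dS : `|Sx - Sy| <= n%:R * (eB * d).
  rewrite /Sx /Sy -sumrB; apply: le_trans (ler_norm_sum _ _ _) _.
  apply: le_trans (ler_sum _ (fun j _ => (_ : `|expR (x j 0) - expR (y j 0)| <= eB * d))) _.
    by move=> j; rewrite distrC.
  by rewrite sumr_const card_ord mulr_natl.
have -> : expR (y i 0) / Sy - expR (x i 0) / Sx =
   (expR (y i 0) - expR (x i 0)) * Sx^-1 + (expR (y i 0) / Sy) * ((Sx - Sy) * Sx^-1).
  by field; apply/andP; split; rewrite gt_eqF.
apply: le_trans (ler_normD _ _) _.
have iS0 : 0 <= Sx^-1 by rewrite invr_ge0 ltW.
rewrite normrM (ger0_norm iS0) normrM (ger0_norm qy0) normrM (ger0_norm iS0).
have t1 : `|expR (y i 0) - expR (x i 0)| * Sx^-1 <= eB * d * eB.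
  apply: le_trans (ler_wpM2r iS0 (ediff i)) _.
  by rewrite ler_wpM2l // mulr_ge0 // ltW.
have t2 : `|Sx - Sy| * Sx^-1 <= n%:R * (eB * d) * eB.
  apply: le_trans (ler_wpM2r iS0 dS) _.
  by rewrite ler_wpM2l // mulr_ge0 // mulr_ge0 // ltW.
have t3 : expR (y i 0) / Sy * (`|Sx - Sy| * Sx^-1) <= `|Sx - Sy| * Sx^-1.
  by rewrite ler_piMl // mulr_ge0.
have : 0 <= n%:R * (eB * d) * eB by rewrite !mulr_ge0 // ltW.
have -> : eB * eB * (1 + n%:R) * d = eB * d * eB + n%:R * (eB * d) * eB by ring.
lra.
Qed.

Lemma block_err (R : realType) (p : nat -> {poly R})
  (hp : forall alpha : nat, (4 <= alpha)%N -> forall a b : R,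
      0 <= a <= 1 -> 0 <= b <= 1 ->
      `|malpha (p alpha) a b - Num.max a b| <= 2 ^- alpha)
  (B : R) (hB : 1 < B) (m n : nat) (A : block R m n) :
  exists c L : R, 0 <= c /\ 0 <= L /\ forall alpha : nat, (4 <= alpha)%N ->
    forall x y : 'cV[R]_m, supnorm x <= B -> supnorm y <= B ->
    supnorm (block_approx p alpha B A y - block_eval A x)
      <= c * 2 ^- alpha + L * supnorm (y - x).
Proof.
have B0 : 0 < B by apply: lt_trans hB.
have key : forall c L : R, 0 <= c -> 0 <= L ->
   (forall alpha : nat, (4 <= alpha)%N ->
    forall x y : 'cV[R]_m, supnorm x <= B -> supnorm y <= B ->
    forall i, `|(block_approx p alpha B A y - block_eval A x) i 0|
      <= c * 2 ^- alpha + L * supnorm (y - x)) ->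
   exists c L : R, 0 <= c /\ 0 <= L /\ forall alpha : nat, (4 <= alpha)%N ->
    forall x y : 'cV[R]_m, supnorm x <= B -> supnorm y <= B ->
    supnorm (block_approx p alpha B A y - block_eval A x)
      <= c * 2 ^- alpha + L * supnorm (y - x).
  move=> c L c0 L0 h; exists c, L; split => //; split => // alpha ha x y hx hy.
  apply: supnorm_le; last exact: h.
  have /andP[e0 _] := eps_bnd R alpha ha.
  by rewrite addr_ge0 // mulr_ge0 // supnorm_ge0.
have sd : forall k (x y : 'cV[R]_k) i, `|y i 0 - x i 0| <= supnorm (y - x).
  by move=> k x y i; have := supnorm_ge _ _ (y - x) i; rewrite !mxE.
have sb : forall k (x : 'cV[R]_k) i, supnorm x <= B -> `|x i 0| <= B.
  by move=> k x i h; apply: le_trans (supnorm_ge _ _ x i) h.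
case: A key => [m0 n0 M b | n0 | m0 n0 k0 hk w | n0] key.
- apply: (key 0 (\sum_i \sum_j `|M i j|)) => //.
    by apply: sumr_ge0 => i _; apply: sumr_ge0.
  move=> alpha ha x y hx hy i /=.
  rewrite mul0r add0r opprD addrACA subrr addr0 -mulmxBr mxE.
  apply: le_trans (ler_norm_sum _ _ _) _.
  apply: le_trans (_ : \sum_j `|M i j| * supnorm (y - x) <= _).
    apply: ler_sum => j _; rewrite normrM ler_wpM2l //.
    exact: supnorm_ge.
  rewrite -mulr_suml ler_wpM2r ?supnorm_ge0 //.
  rewrite (bigD1 i) //= lerDl; apply: sumr_ge0 => k _; exact: sumr_ge0.
- apply: (key B 1) => //; first exact: ltW.
  move=> alpha ha x y hx hy i /=; rewrite !mxE mul1r.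
  have := relu_err R (p alpha) _ (hp alpha ha) B B0 (y i 0) (sb _ y i hy).
  have := relu_lip R (y i 0) (x i 0); have := sd _ x y i.
  set u := rtilde _ _ _; set v := Num.max (y i 0) 0; set z := Num.max (x i 0) 0.
  move=> h1 h2 h3.
  have := ler_distD v u z; rewrite distrC (distrC v z) => h4.
  move: h4; rewrite (distrC z v) => h4; lra.
- apply: (key (56 * B) 1) => //; first by rewrite mulr_ge0 // ltW.
  move=> alpha ha x y hx hy j /=; rewrite !mxE mul1r.
  have sw : forall (z : 'cV[R]_m0), size (window w z j) = (k0 ^ 2)%N.
    by move=> z; rewrite /window size_map size_enum_ord.
  have := mtilde_err R (p alpha) alpha ha (hp alpha ha) B B0 (window w y j).
  rewrite sw => /(_ ltac:(rewrite expn_gt0; lia) ltac:(rewrite -mulnn; nia)).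
  move=> /(_ ltac:(move=> z /mapP[t _ ->]; exact: sb)) h1.
  have h2 := maxseq_map_lip R _ (enum 'I_(k0 ^ 2)) (fun t => y (w j t) 0) (fun t => x (w j t) 0)
     (supnorm (y - x)) (supnorm_ge0 _ _ _) (fun t _ => sd _ x y (w j t)).
  rewrite /window in h1 h2 *.
  set u := Mtilde _ _ _ _ in h1 *; set v := maxseq _ in h1 h2 *; set z := maxseq _ in h2 *.
  have := ler_distD v u z; rewrite distrC (distrC v z) => h4.
  by apply: le_trans h4 _; apply: lerD => //; rewrite (distrC z).
- apply: (key 0 (expR B * expR B * (1 + n0%:R))) => //.
    by apply: mulr_ge0; [apply: mulr_ge0; apply: ltW; apply: expR_gt0 | apply: addr_ge0].
  move=> alpha ha x y hx hy i /=; rewrite mul0r add0r mxE.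
  have -> : (- softmax x) i 0 = - softmax x i 0 by rewrite mxE.
  exact: (softmax_lip R B n0 x y i hx hy).
Qed.

Lemma model_err (R : realType) (p : nat -> {poly R})
  (hp : forall alpha : nat, (4 <= alpha)%N -> forall a b : R,
      0 <= a <= 1 -> 0 <= b <= 1 ->
      `|malpha (p alpha) a b - Num.max a b| <= 2 ^- alpha)
  (B : R) (hB : 1 < B) (m n : nat) (F : model R m n) :
  exists C : R, 0 <= C /\ forall alpha : nat, (4 <= alpha)%N -> forall x : 'cV[R]_m,
    supnorm x <= B ->
    inner_bounded (@block_eval R) B F x ->
    inner_bounded (block_approx p alpha B) B F x ->
    supnorm (model_eval (block_approx p alpha B) F x - model_eval (@block_eval R) F x)
      <= C * 2 ^- alpha.
Proof.
elim: F => [m0 n0 b | m0 k0 n0 A F' IH].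
  have [c [L [c0 [L0 h]]]] := block_err R p hp B hB m0 n0 b.
  exists c; split => // alpha ha x hx _ _ /=.
  have z0 : supnorm (0 : 'cV[R]_m0) = 0.
    apply/eqP; rewrite eq_le supnorm_ge0 andbT; apply: supnorm_le => // i.
    by rewrite mxE normr0.
  by have := h alpha ha x x hx hx; rewrite subrr z0 mulr0 addr0.
have [c [L [c0 [L0 h]]]] := block_err R p hp B hB k0 n0 A.
have [C [C0 hC]] := IH.
exists (c + L * C); split; first by rewrite addr_ge0 // mulr_ge0.
move=> alpha ha x hx /= [i1 b1] [i2 b2].
apply: le_trans (h alpha ha _ _ b1 b2) _.
have /andP[e0 _] := eps_bnd R alpha ha.
have := hC alpha ha x hx i1 i2.
move=> h3; have h4 := ler_wpM2l L0 h3.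
rewrite mulrDl; apply: lerD => //; by rewrite -mulrA.
Qed.

Theorem theorem4 (R : realType) (p : nat -> {poly R})
  (hp : forall alpha : nat, (4 <= alpha)%N -> forall a b : R,
      0 <= a <= 1 -> 0 <= b <= 1 ->
      `|malpha (p alpha) a b - Num.max a b| <= 2 ^- alpha)
  (B : R) (hB : 1 < B) (m n : nat) (F : model R m n) :
  exists C : R, forall alpha : nat, (4 <= alpha)%N -> forall x : 'cV[R]_m,
    supnorm x <= B ->
    inner_bounded (@block_eval R) B F x ->
    inner_bounded (block_approx p alpha B) B F x ->
    supnorm (model_eval (block_approx p alpha B) F x - model_eval (@block_eval R) F x)
      <= C * 2 ^- alpha.
Proof.
have [C [_ h]] := model_err R p hp B hB m n F.
by exists C.
Qed.
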